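(* Let $(S,* )$ be a finite multisemigroup containing two different elements $a$ and $b$ such that $a*a=\{a\}$ and either $\{a,b\}\subseteq a*b$ or $\{a,b\}\subseteq b*a$. Then $(S,* )$ does not admit any deformation.
   Context: A multisemigroup is a set $S$ with a map $*:S\times S\to 2^S$ such that $\bigcup_{s\in x*y}s*z=\bigcup_{t\in y*z}x*t$ for all $x,y,z\in S$. A finitary multisemigroup with multiplicities on a non-empty set $S$ is a map $\mu:S\times S\to\{\text{functions }S\to\mathrm{Card}_{\aleph_0}\}$ (where $\mathrm{Card}_{\aleph_0}$ is the set of cardinals $\le\aleph_0$ with truncated cardinal arithmetic), $(s,t)\mapsto\mu_{s,t}$, such that every value $\mu_{r,s}(t)$ is finite, $\{t:\mu_{r,s}(t)\neq0\}$ is finite for all $r,s$, and for all $r,s,t\in S$: $\sum_{i\in S}\mu_{s,t}(i)\mu_{r,i}=\sum_{j\in S}\mu_{r,s}(j)\mu_{j,t}$ as functions on $S$ (where $\lambda\nu$ is the pointwise sum of $\lambda$ copies of $\nu$). A deformation of a finite multisemigroup $(S,* )$ is a finitary multisemigroup with multiplicities $(S,\mu)$ such that for all $x,y,z\in S$: $z\in x*y$ if and only if $\mu_{x,y}(z)\neq0$. *)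

(* Defs.v *)
From mathcomp Require Import all_boot.
Set Implicit Arguments. Unset Strict Implicit. Unset Printing Implicit Defensive.

Definition is_multisemigroup (T : finType) (mul : T -> T -> {set T}) : Prop :=
  forall x y z : T,
    \bigcup_(s in mul x y) mul s z = \bigcup_(t in mul y z) mul x t.

(* Since T is finite and every value mu_{r,s}(t) is required to be finite,
   the values are natural numbers, the finite-support condition is automatic,
   and the truncated cardinal arithmetic coincides with nat arithmetic.
   mu r s t = mu_{r,s}(t). *)
Definition is_finitary_mult (T : finType) (mu : T -> T -> T -> nat) : Prop :=
  forall r s t u : T,
    \sum_(i : T) mu s t i * mu r i u = \sum_(j : T) mu r s j * mu j t u.

Definition is_deformation (T : finType) (mul : T -> T -> {set T})
    (mu : T -> T -> T -> nat) : Prop :=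
  is_finitary_mult mu /\
  forall x y z : T, (z \in mul x y) <-> (mu x y z != 0).

(* Main.v *)
Require Import Defs.
From mathcomp Require Import all_boot zify.

Lemma sum2_ge (T : finType) (f : T -> nat) (a b : T) : a != b ->
  f a + f b <= \sum_(i : T) f i.
Proof.
move=> hab; rewrite (bigD1 a) //= (bigD1 b) /=; last by rewrite eq_sym.
by rewrite addnA leq_addr.
Qed.

Lemma sum1_eq (T : finType) (f : T -> nat) (a : T) :
  (forall i, i != a -> f i = 0) -> \sum_(i : T) f i = f a.
Proof.
move=> H; rewrite (bigD1 a) //= big1 ?addn0 // => i /H.
Qed.

Theorem corollary13 (T : finType) (mul : T -> T -> {set T})
    (Hms : is_multisemigroup mul) (a b : T) (hab : a != b)
    (haa : mul a a = [set a])
    (hab2 : [set a; b] \subset mul a b \/ [set a; b] \subset mul b a) :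
  ~ (exists mu : T -> T -> T -> nat, is_deformation mul mu).
Proof.
move=> [mu [Hass Hdef]].
have Hz : forall i, i != a -> mu a a i = 0.
  move=> i hi; apply/eqP; apply/negPn/negP => /Hdef.
  by rewrite haa in_set1 (negbTE hi).
have Hk : 0 < mu a a a.
  by rewrite lt0n; apply/Hdef; rewrite haa set11.
case: hab2 => /subsetP Hs.
- have Ha : 0 < mu a b a by rewrite lt0n; apply/Hdef/Hs; rewrite !inE eqxx.
  have Hb : 0 < mu a b b by rewrite lt0n; apply/Hdef/Hs; rewrite !inE eqxx orbT.
  have E := Hass a a b a.
  rewrite (@sum1_eq T (fun j => mu a a j * mu j b a) a) in E; last by move=> i /Hz ->.
  have := @sum2_ge T (fun i => mu a b i * mu a i a) a b hab.
  rewrite /= E mulnC => H.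
  have : mu a a a * mu a b a + 1 <= mu a a a * mu a b a + mu a b b * mu a b a.
    by rewrite leq_add2l muln_gt0 Ha Hb.
  move=> H2; have := leq_trans H2 H.
  move=> H3; lia.
- have Ha : 0 < mu b a a by rewrite lt0n; apply/Hdef/Hs; rewrite !inE eqxx.
  have Hb : 0 < mu b a b by rewrite lt0n; apply/Hdef/Hs; rewrite !inE eqxx orbT.
  have E := Hass b a a a.
  rewrite (@sum1_eq T (fun j => mu a a j * mu b j a) a) in E; last by move=> i /Hz ->.
  have := @sum2_ge T (fun j => mu b a j * mu j a a) a b hab.
  rewrite /= -E mulnC => H.
  have : mu a a a * mu b a a + 1 <= mu a a a * mu b a a + mu b a b * mu b a a.
    by rewrite leq_add2l muln_gt0 Ha Hb.
  move=> H2; have := leq_trans H2 H.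
  move=> H3; lia.
Qed.
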